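(* Let $M_n=V\,{\rm diag}(\Lambda_{n1},\dots,\Lambda_{nd})V^{-1}$ and $\hat M_n=M_n+\sigma W_n$, $n=1,\dots,N$, with $V$ real invertible, $\Lambda_{ni}$ real, and $\|W_n\|\le1$; let $U_\circ$ be orthogonal with ${\rm low}(U_\circ^TM_nU_\circ)=0$ for all $n$; let $Y$ be skew-symmetric with $\|Y\|=1$ and $X$ any skew-symmetric matrix. For $\alpha,\sigma$ put $U=U_\circ e^{\alpha Y}$, $K_n=U^T\hat M_nU$ and $$g_n={\rm low}(K_n),\quad\dot g_n={\rm low}([K_n,X]),\quad\ddot g_n={\rm low}([[K_n,X],X]),$$ regarded as functions of $(\alpha,\sigma)$; let $\partial_\alpha$, $\partial_\sigma$ denote partial derivatives at $(\alpha,\sigma)=(0,0)$, and let $g_n,\dot g_n,\ddot g_n$ without derivative denote their values at $(0,0)$. Define $$\tilde A_\alpha=\Big|\sum_{n=1}^N{\rm Tr}\big(\dot g_n^T\partial_\alpha\dot g_n+\dot g_n^T\partial_\alpha\dot g_n+\ddot g_n^T\partial_\alpha g_n+\partial_\alpha g_n^T\ddot g_n\big)\Big|,$$ $$\tilde A_\sigma=\Big|\sum_{n=1}^N{\rm Tr}\big(\dot g_n^T\partial_\sigma\dot g_n+\partial_\sigma\dot g_n^T\dot g_n+\ddot g_n^T\partial_\sigma g_n+\partial_\sigma g_n^T\ddot g_n\big)\Big|.$$ Then $\tilde A_\alpha\le A_\alpha\|X\|^2$ and $\tilde A_\sigma\le A_\sigma\|X\|^2$ with $A_\alpha=32\sum_{n=1}^N\|M_n\|^2$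 and $A_\sigma=16\sqrt N\sqrt{\sum_{n=1}^N\|M_n\|^2}$.
   Context: All matrices are real $d\times d$. ${\rm low}(A)$ is the strictly lower-triangular part of $A$; $[A,B]=AB-BA$; $\|\cdot\|$ is the Frobenius norm; $e^{\alpha Y}$ is the matrix exponential. *)

(* Defs.v *)
From HB Require Import structures.
From mathcomp Require Import all_boot all_order all_algebra.
From mathcomp Require Import all_classical all_reals all_analysis.
Set Implicit Arguments. Unset Strict Implicit. Unset Printing Implicit Defensive.
Import Order.TTheory GRing.Theory Num.Theory.
Import numFieldNormedType.Exports.
Local Open Scope ring_scope.

Section Defs.
Variables (R : realType) (d : nat).
Local Notation M := 'M[R]_d.

Definition low (A : M) : M := \matrix_(i, j) (if (j < i)%N then A i j else 0).

Definition comm (A B : M) : M := A *m B - B *m A.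

Definition frob (A : M) : R := Num.sqrt (\sum_i \sum_j (A i j) ^+ 2).

Definition expm (A : M) : M :=
  limn (fun n : nat => \sum_(k < n) ((k`!)%:R^-1 *: (A ^+ k))).

Definition skew_mx (A : M) : Prop := A^T = - A.
Definition orthogonal_mx (U : M) : Prop := U^T *m U = 1%:M.
End Defs.

(* Main.v *)
Require Import Defs.
From HB Require Import structures.
From mathcomp Require Import all_boot all_order all_algebra.
From mathcomp Require Import all_classical all_reals all_analysis.
From mathcomp Require Import ring lra.
Import Order.TTheory GRing.Theory Num.Theory.
Import numFieldNormedType.Exports.
Set Implicit Arguments. Unset Strict Implicit.
Local Open Scope ring_scope.

Section F.
Variable R : realType.

Lemma cs (I : finType) (a b : I -> R) :
  (\sum_i a i * b i)^+2 <= (\sum_i a i ^+2) * (\sum_i b i ^+2).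
Proof.
have S1 : \sum_i \sum_j (a i * b j)^+2 = (\sum_i a i ^+2) * (\sum_i b i ^+2).
  rewrite mulr_suml; apply eq_bigr => i _; rewrite mulr_sumr; apply eq_bigr => j _.
  by rewrite exprMn.
have S2 : \sum_i \sum_j (a j * b i)^+2 = (\sum_i a i ^+2) * (\sum_i b i ^+2).
  by rewrite exchange_big.
have S3 : \sum_i \sum_j (a i * b j) * (a j * b i) = (\sum_i a i * b i)^+2.
  rewrite expr2 mulr_suml; apply eq_bigr => i _; rewrite mulr_sumr; apply eq_bigr => j _.
  ring.
have H0 : 0 <= \sum_i \sum_j (a i * b j - a j * b i)^+2.
  by apply: sumr_ge0 => i _; apply: sumr_ge0 => j _; apply: sqr_ge0.
have E : \sum_i \sum_j (a i * b j - a j * b i)^+2 =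
   \sum_i \sum_j (a i * b j)^+2 + \sum_i \sum_j (a j * b i)^+2
   - 2 * \sum_i \sum_j (a i * b j) * (a j * b i).
  rewrite -big_split /= mulr_sumr -sumrB; apply eq_bigr => i _.
  rewrite -big_split /= mulr_sumr -sumrB; apply eq_bigr => j _.
  ring.
rewrite E S1 S2 S3 in H0. lra.
Qed.

Variable d : nat.
Local Notation M := 'M[R]_d.

Definition ss (A : M) := \sum_i \sum_j (A i j)^+2.
Lemma ss_ge0 (A : M) : 0 <= ss A.
Proof. by apply: sumr_ge0 => i _; apply: sumr_ge0 => j _; apply: sqr_ge0. Qed.
Lemma frob_ge0 (A : M) : 0 <= frob A.
Proof. exact: sqrtr_ge0. Qed.
Lemma frob2 (A : M) : frob A ^+ 2 = ss A.
Proof. by rewrite /frob sqr_sqrtr // ss_ge0. Qed.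

Lemma sum_pair (F : 'I_d -> 'I_d -> R) :
  \sum_i \sum_j F i j = \sum_(p : 'I_d * 'I_d) F p.1 p.2.
Proof. by rewrite pair_bigA. Qed.

Lemma ip_le (A B : M) :
  `|\sum_i \sum_j A i j * B i j| <= frob A * frob B.
Proof.
rewrite -(@ger0_norm _ (frob A * frob B)); last by rewrite mulr_ge0 ?frob_ge0.
rewrite -ler_sqr ?nnegrE ?normr_ge0 // !real_normK ?num_real //.
rewrite exprMn !frob2 /ss !sum_pair.
exact: cs.
Qed.

Lemma frob_le_sq (A : M) r : 0 <= r -> ss A <= r ^+ 2 -> frob A <= r.
Proof.
move=> r0 h; rewrite -(@ler_sqr _ (frob A) r) ?nnegrE ?frob_ge0 //.
by rewrite frob2.
Qed.

Lemma frobD (A B : M) : frob (A + B) <= frob A + frob B.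
Proof.
apply: frob_le_sq; first by rewrite addr_ge0 ?frob_ge0.
have h := ip_le A B; have h2 := ler_norm (\sum_i \sum_j A i j * B i j).
have -> : ss (A + B) = ss A + ss B + 2 * \sum_i \sum_j A i j * B i j.
  rewrite /ss mulr_sumr -!big_split /=; apply eq_bigr => i _.
  rewrite mulr_sumr -!big_split /=; apply eq_bigr => j _; rewrite mxE; ring.
rewrite sqrrD -!frob2; nra.
Qed.

Lemma frobZ a (A : M) : frob (a *: A) = `|a| * frob A.
Proof.
rewrite /frob -(@sqrtr_sqr _ a) -sqrtrM ?sqr_ge0 //; congr Num.sqrt.
rewrite mulr_sumr; apply eq_bigr => i _; rewrite mulr_sumr; apply eq_bigr => j _.
by rewrite mxE exprMn.
Qed.

Lemma frobN (A : M) : frob (- A) = frob A.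
Proof. by rewrite -scaleN1r frobZ normrN normr1 mul1r. Qed.

Lemma frobB (A B : M) : frob (A - B) <= frob A + frob B.
Proof. by rewrite -(frobN B) frobD. Qed.

Lemma frobT (A : M) : frob (A^T) = frob A.
Proof.
rewrite /frob exchange_big; congr Num.sqrt; apply eq_bigr => i _; apply eq_bigr => j _.
by rewrite mxE.
Qed.

Lemma frob_low (A : M) : frob (low A) <= frob A.
Proof.
rewrite /frob ler_sqrt ?ss_ge0 //; apply: ler_sum => i _; apply: ler_sum => j _.
rewrite mxE; case: ifP => _ //; by rewrite expr0n /= sqr_ge0.
Qed.

Lemma frob_mul (A B : M) : frob (A *m B) <= frob A * frob B.
Proof.
apply: frob_le_sq; first by rewrite mulr_ge0 ?frob_ge0.
rewrite exprMn !frob2 /ss mulr_suml; apply: ler_sum => i _.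
rewrite exchange_big mulr_sumr /=; apply: ler_sum => j _.
rewrite mxE; exact: cs.
Qed.

Lemma entry_le (A : M) i j : `|A i j| <= frob A.
Proof.
rewrite -(@ger0_norm _ (frob A)) ?frob_ge0 //.
rewrite -ler_sqr ?nnegrE ?normr_ge0 // !real_normK ?num_real // frob2 /ss.
rewrite (bigD1 i) //= (bigD1 j) //= -addrA lerDl.
rewrite addr_ge0 //; first by apply: sumr_ge0 => k _; apply: sqr_ge0.
by apply: sumr_ge0 => k _; apply: sumr_ge0 => l _; apply: sqr_ge0.
Qed.


End F.

Section F2.
Variable R : realType.
Variable d : nat.
Local Notation M := 'M[R]_d.
Lemma tr_ip (A B : M) : \tr (A^T *m B) = \sum_i \sum_j A i j * B i j.
Proof.
rewrite /mxtrace exchange_big; apply eq_bigr => i _; rewrite mxE; apply eq_bigr => j _.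
by rewrite mxE.
Qed.

Lemma tr_le (A B : M) : `|\tr (A^T *m B)| <= frob A * frob B.
Proof. by rewrite tr_ip ip_le. Qed.

Lemma frob_tr (A : M) : frob A = Num.sqrt (\tr (A^T *m A)).
Proof. by rewrite tr_ip /frob; congr Num.sqrt; apply eq_bigr => i _; apply eq_bigr => j _; rewrite expr2. Qed.

Lemma frob_orth (U A : M) : U^T *m U = 1%:M -> frob (U^T *m A *m U) = frob A.
Proof.
move=> hU; have hU' : U *m U^T = 1%:M by apply: mulmx1C.
rewrite !frob_tr; congr Num.sqrt.
rewrite !trmx_mul trmxK !mulmxA -[U^T *m A^T *m U *m U^T]mulmxA hU' mulmx1.
rewrite -!mulmxA mxtrace_mulC !mulmxA -[A^T *m A *m U *m U^T]mulmxA hU' mulmx1.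
by [].
Qed.

Lemma frob_comm (A B : M) : frob (comm A B) <= 2 * frob A * frob B.
Proof.
rewrite /comm; apply: (le_trans (frobB _ _)).
have h1 := frob_mul A B; have h2 := frob_mul B A.
rewrite [frob B * _]mulrC in h2; rewrite -mulrA.
set x := frob (A *m B) in h1 *; set y := frob (B *m A) in h2 *; set z := frob A * frob B in h1 h2 *.
lra.
Qed.

Lemma entry_mx (A : M) i j : `|A i j| <= `|A|.
Proof.
rewrite [leRHS]/Num.Def.normr /= mx_normrE; apply/bigmax_geP; right => /=; by exists (i, j).
Qed.

Lemma mx_le_frob (A : M) : `|A| <= frob A.
Proof.
rewrite [leLHS]/Num.Def.normr /= mx_normrE; apply: bigmax_le => //; first exact: frob_ge0.
by move=> [i j] _; apply: entry_le.
Qed.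

Lemma frob_le_mx (A : M) : frob A <= d%:R * `|A|.
Proof.
apply: frob_le_sq; first by rewrite mulr_ge0 ?normr_ge0.
have h : forall i j, A i j ^+ 2 <= `|A| ^+ 2.
  move=> i j; have e := entry_mx A i j.
  rewrite -[A i j ^+ 2](@real_normK _ (A i j)) ?num_real // !expr2.
  by apply: ler_pM; rewrite ?normr_ge0.
rewrite /ss; apply: (@le_trans _ _ (\sum_(i < d) \sum_(j < d) `|A| ^+ 2)).
  by apply: ler_sum => i _; apply: ler_sum => j _; apply: h.
rewrite !sumr_const !card_ord -mulrnA exprMn -natrX mulr_natl mulnn.
by [].
Qed.
End F2.

Section C.
Variable R : realType.
Variable d : nat.
Local Notation M := 'M[R]_d.

Lemma mx_normed_cvg (u_ : nat -> M) :
  cvgn [normed series u_] -> cvgn (series u_).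
Proof.
move=> /cauchy_cvgP/cauchy_seriesP u_ncvg.
apply/cauchy_cvgP/cauchy_seriesP => e /u_ncvg.
apply: filterS => n /=; rewrite ger0_norm ?sumr_ge0//.
by apply: le_lt_trans; apply: ler_norm_sum.
Qed.

Lemma geo_tail (s : R) m : 0 <= s -> 2 * s <= 1 ->
  \sum_(0 <= k < m) s ^+ k.+2 + 2 * s ^+ m.+2 <= 2 * s ^+ 2.
Proof.
move=> s0 s1; elim: m => [|m ih]; first by rewrite big_geq // add0r.
rewrite big_nat_recr //=.
have t0 : 0 <= s ^+ m.+2 by apply: exprn_ge0.
have -> : s ^+ m.+3 = s * s ^+ m.+2 by rewrite exprS.
set t := s ^+ m.+2 in ih t0 *.
set S := \sum_(0 <= k < m) s ^+ k.+2 in ih *.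
nra.
Qed.

Lemma expm_bound (Y : M) (a : R) : frob Y <= 1 -> `|a| <= 2^-1 ->
  `|(1 + a *: Y) - expm (a *: Y)| <= 2 * a ^+ 2.
Proof.
move=> hY ha.
set A := a *: Y.
pose u k : M := (k`!%:R)^-1 *: A ^+ k.
have hA : frob A <= `|a|.
  rewrite frobZ -[X in _ <= X]mulr1; apply: ler_wpM2l => //; exact: normr_ge0.
have fpow k : frob (A ^+ k.+1) <= `|a| ^+ k.+1.
  elim: k => [|k ih]; first by rewrite !expr1.
  rewrite exprS (exprS `|a|); apply: (le_trans (frob_mul _ _)).
  by apply: ler_pM; rewrite ?frob_ge0.
have ifact k : 0 <= (k`!%:R : R)^-1 <= 1.
  apply/andP; split; first by rewrite invr_ge0 ler0n.
  by rewrite invf_le1 ?ltr0n ?fact_gt0 // ler1n fact_gt0.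
have fu k : frob (u k.+1) <= `|a| ^+ k.+1.
  rewrite frobZ; have /andP[h1 h2] := ifact k.+1; rewrite ger0_norm //.
  rewrite -[X in _ <= X]mul1r; apply: ler_pM => //; exact: frob_ge0.
have a0 : 0 <= `|a| by [].
have hu k : `|u k.+1| <= 2^-1 ^+ k.+1.
  apply: (le_trans (mx_le_frob _)); apply: (le_trans (fu k)).
  by apply: lerXn2r; rewrite ?nnegrE.
pose c := `|u 0| + 1.
have cN : cvgn (series (fun k => `|u k|)).
  apply: (@series_le_cvg _ _ (geometric c 2^-1)).
  - by move=> n.
  - by move=> n; rewrite /geometric /= mulr_ge0 // ?exprn_ge0 // addr_ge0.
  - case=> [|n]; first by rewrite /geometric /= expr0 mulr1 lerDl.
    rewrite /geometric /=; apply: (le_trans (hu n)).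
    rewrite -[X in X <= _]mul1r; apply: ler_wpM2r; first by rewrite exprn_ge0.
    by rewrite lerDr.
  - apply/cvg_ex; eexists; apply: cvg_geometric_series.
    by rewrite ger0_norm // invf_lt1 // ltr1n.
have cS : cvgn (series u) by apply: mx_normed_cvg.
have eq : (fun n => \sum_(k < n) ((k`!)%:R^-1 *: (A ^+ k))) = series u.
  by apply/funext => n; rewrite /series /= big_mkord.
rewrite /expm eq.
suff : closed_ball_ Num.Def.normr (1 + A) (2 * a ^+ 2) (limn (series u)) by [].
have cl := @closed_closed_ball_ R M (1 + A) (2 * a ^+ 2).
apply: (closed_cvg _ cl _ (limn (series u)) cS).
exists 2%N => // n /= hn.
rewrite /closed_ball_ /=.
case: n hn => [|[|m]] // _.
rewrite /series /= big_nat_recl // big_nat_recl //.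
have -> : u 0%N = 1 by rewrite /u /= invr1 scale1r expr0.
have -> : u 1%N = A by rewrite /u /= invr1 scale1r expr1.
rewrite addrA opprD addrA subrr sub0r normrN.
apply: (le_trans (ler_norm_sum _ _ _)).
apply: (@le_trans _ _ (\sum_(0 <= i < m) `|a| ^+ i.+2)).
  apply: ler_sum => i _; apply: (le_trans (mx_le_frob _)); exact: (fu i.+1).
have := geo_tail m a0 (_ : 2 * `|a| <= 1).
rewrite real_normK ?num_real //.
have : 0 <= `|a| ^+ m.+2 by apply: exprn_ge0.
move=> h1 h2; have h3 : 2 * `|a| <= 1 by lra.
have := h2 h3; lra.
Qed.
End C.

Section D.
Variable R : realType.
Variable d : nat.
Local Notation M := 'M[R]_d.

Definition expansion (f : R -> M) (f0 f1 : M) (C δ : R) :=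
  forall h, `|h| <= δ -> frob (f h - f0 - h *: f1) <= C * h ^+ 2.

Lemma frob_eq0 (A : M) : frob A <= 0 -> A = 0.
Proof.
move=> h; have : `|A| <= 0 by apply: le_trans (mx_le_frob A) h.
by rewrite normr_le0 => /eqP.
Qed.

Lemma expansion0 f f0 f1 C δ : 0 <= δ -> expansion f f0 f1 C δ -> f 0 = f0.
Proof.
move=> d0 e; have := e 0; rewrite normr0 => /(_ d0).
rewrite scale0r subr0 expr0n /= mulr0 => /frob_eq0 /eqP; rewrite subr_eq0 => /eqP //.
Qed.

Lemma derive_expansion f f0 f1 C δ : 0 < δ -> expansion f f0 f1 C δ ->
  derive1 f 0 = f1.
Proof.
move=> d0 e; have f00 := expansion0 (ltW d0) e.
rewrite /derive1; apply: norm_cvg_lim.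
apply/cvgrPdist_le => eps eps0.
set C' := `|C| + 1.
have C'0 : 0 < C' by rewrite /C' ltr_pwDr.
set r := Num.min δ (eps / C').
have r0 : 0 < r by rewrite lt_min d0 divr_gt0.
have hsm : \forall h \near ((0 : R)^')%classic, `|h| < r.
  apply: nbhs_dnbhs; exists r => // z /=; by rewrite sub0r normrN.
apply: (filterS2 _ _ (nbhs_dnbhs_neq 0) hsm) => h hn hs.
rewrite addr0 f00.
have -> : f1 - h^-1 *: (f h - f0) = - (h^-1 *: (f h - f0 - h *: f1)).
  by rewrite [in RHS]scalerBr scalerA mulVf // scale1r opprB.
rewrite normrN normrZ; apply: (@le_trans _ _ (`|h^-1| * (C * h ^+ 2))).
  by apply: ler_wpM2l => //; apply: (le_trans (mx_le_frob _)); apply: e;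
     apply: ltW; apply: (lt_le_trans hs); rewrite ge_min lexx.
have hr1 : `|h| <= eps / C' by apply: ltW; apply: (lt_le_trans hs); rewrite ge_min lexx orbT.
rewrite normfV -real_normK ?num_real //.
have hh : `|h| != 0 by rewrite normr_eq0.
have -> : `|h|^-1 * (C * `|h| ^+ 2) = C * `|h| by field.
have hC : C <= C' by rewrite /C'; apply: le_trans (ler_norm C) _; rewrite lerDl.
apply: (@le_trans _ _ (C' * `|h|)); first by apply: ler_wpM2r.
by rewrite mulrC -ler_pdivlMr.
Qed.

End D.

Section E.
Variable R : realType.
Variable d : nat.
Local Notation M := 'M[R]_d.

Lemma mul_ident (A B A0 A1 B0 B1 : M) (h : R) :
  A *m B - A0 *m B0 - h *: (A1 *m B0 + A0 *m B1) =
  (A - A0 - h *: A1) *m B + (A0 + h *: A1) *m (B - B0 - h *: B1)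
  + (h * h) *: (A1 *m B1).
Proof.
rewrite !(mulmxBl, mulmxDl, mulmxBr, mulmxDr) -!scalemxAl -!scalemxAr !scalerA.
apply/matrixP => i j; rewrite !mxE.
ring.
Qed.

Lemma exp_const (A : M) (δ : R) : expansion (fun _ => A) A 0 0 δ.
Proof. by move=> h _; rewrite subrr scaler0 subr0 mul0r frob_tr trmx0 mul0mx mxtrace0 sqrtr0. Qed.

Lemma exp_T (f : R -> M) f0 f1 C δ : expansion f f0 f1 C δ ->
  expansion (fun h => (f h)^T) f0^T f1^T C δ.
Proof.
move=> e h hh.
have -> : (f h)^T - f0^T - h *: f1^T = (f h - f0 - h *: f1)^T by apply/matrixP => i j; rewrite !mxE.
by rewrite frobT; apply: e.
Qed.

Lemma exp_low (f : R -> M) f0 f1 C δ : expansion f f0 f1 C δ ->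
  expansion (fun h => low (f h)) (low f0) (low f1) C δ.
Proof.
move=> e h hh.
have -> : low (f h) - low f0 - h *: low f1 = low (f h - f0 - h *: f1).
  apply/matrixP => i j; rewrite !mxE; case: ifP => _; ring.
by apply: (le_trans (frob_low _)); apply: e.
Qed.

Lemma exp_comm (X : M) (f : R -> M) f0 f1 C δ : expansion f f0 f1 C δ ->
  expansion (fun h => comm (f h) X) (comm f0 X) (comm f1 X) (2 * frob X * C) δ.
Proof.
move=> e h hh.
have -> : comm (f h) X - comm f0 X - h *: comm f1 X = comm (f h - f0 - h *: f1) X.
  by rewrite /comm !(mulmxBl, mulmxDl, mulmxBr, mulmxDr) -!scalemxAl -!scalemxAr; apply/matrixP => i j; rewrite !mxE; ring.
apply: (le_trans (frob_comm _ _)).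
have hq := e h hh; have hx := frob_ge0 X.
set q := frob _ in hq *; set x := frob X in hx *; set H := h ^+ 2 in hq *.
have hqx : q * x <= (C * H) * x by apply: ler_wpM2r.
have -> : 2 * x * C * H = 2 * ((C * H) * x) by ring.
have -> : 2 * q * x = 2 * (q * x) by ring.
lra.
Qed.

Lemma exp_mul (fA fB : R -> M) A0 A1 B0 B1 CA CB δ : 0 <= CA -> 0 <= CB -> 0 <= δ ->
  expansion fA A0 A1 CA δ -> expansion fB B0 B1 CB δ ->
  expansion (fun h => fA h *m fB h) (A0 *m B0) (A1 *m B0 + A0 *m B1)
    (CA * (frob B0 + δ * frob B1 + CB * δ ^+ 2) + (frob A0 + δ * frob A1) * CB
     + frob A1 * frob B1) δ.
Proof.
move=> cA cB d0 eA eB h hh.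
rewrite mul_ident.
have hA := eA h hh; have hB := eB h hh.
have h2 : 0 <= h ^+ 2 by apply: sqr_ge0.
have hd2 : h ^+ 2 <= δ ^+ 2.
  by rewrite -real_normK ?num_real //; apply: lerXn2r; rewrite ?nnegrE.
have hfB : frob (fB h) <= frob B0 + δ * frob B1 + CB * δ ^+ 2.
  have -> : fB h = (fB h - B0 - h *: B1) + (B0 + h *: B1) by rewrite -[fB h - B0 - h *: B1]addrA -opprD subrK.
  apply: (le_trans (frobD _ _)); apply: (le_trans (lerD hB (frobD _ _))).
  rewrite frobZ.
  have : `|h| * frob B1 <= δ * frob B1 by apply: ler_wpM2r; rewrite ?frob_ge0.
  have : CB * h ^+ 2 <= CB * δ ^+ 2 by apply: ler_wpM2l.
  lra.
have hfA : frob (A0 + h *: A1) <= frob A0 + δ * frob A1.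
  apply: (le_trans (frobD _ _)); rewrite frobZ lerD2l; apply: ler_wpM2r; rewrite ?frob_ge0 //.
apply: (le_trans (frobD _ _)); apply: (le_trans (lerD (frobD _ _) (lexx _))).
rewrite frobZ -expr2 ger0_norm //.
have t1 : frob ((fA h - A0 - h *: A1) *m fB h) <= CA * h ^+ 2 * (frob B0 + δ * frob B1 + CB * δ ^+ 2).
  apply: (le_trans (frob_mul _ _)); apply: ler_pM; rewrite ?frob_ge0 //.
have t2 : frob ((A0 + h *: A1) *m (fB h - B0 - h *: B1)) <= (frob A0 + δ * frob A1) * (CB * h ^+ 2).
  apply: (le_trans (frob_mul _ _)); apply: ler_pM; rewrite ?frob_ge0 //.
have t3 : frob (A1 *m B1) <= frob A1 * frob B1 by apply: frob_mul.
have t3' : h ^+ 2 * frob (A1 *m B1) <= h ^+ 2 * (frob A1 * frob B1) by apply: ler_wpM2l.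
set p := frob ((fA h - A0 - h *: A1) *m fB h) in t1 *.
set q := frob ((A0 + h *: A1) *m (fB h - B0 - h *: B1)) in t2 *.
set s := frob (A1 *m B1) in t3 t3' *.
set X1 := frob B0 + δ * frob B1 + CB * δ ^+ 2 in t1 *.
set X2 := frob A0 + δ * frob A1 in t2 *.
set X3 := frob A1 * frob B1 in t3' *.
set H := h ^+ 2 in t1 t2 t3' h2 *.
have -> : (CA * X1 + X2 * CB + X3) * H = CA * H * X1 + X2 * (CB * H) + H * X3 by ring.
lra.
Qed.

End E.

Section F.
Variable R : realType.
Variable d : nat.
Local Notation M := 'M[R]_d.

Lemma exp_E (Y : M) : frob Y <= 1 ->
  expansion (fun a => expm (a *: Y)) 1 Y (d%:R * 2) 2^-1.
Proof.
move=> hY h hh.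
apply: (le_trans (frob_le_mx _)).
have -> : expm (h *: Y) - 1 - h *: Y = - ((1 + h *: Y) - expm (h *: Y)).
  by rewrite opprB opprD addrA.
rewrite normrN -mulrA; apply: ler_wpM2l => //; exact: expm_bound.
Qed.

Lemma norm4 (t1 t2 t3 t4 : R) : `|t1 + t2 + t3 + t4| <= `|t1| + `|t2| + `|t3| + `|t4|.
Proof.
apply: (le_trans (ler_normD _ _)); rewrite lerD2r.
apply: (le_trans (ler_normD _ _)); rewrite lerD2r.
exact: ler_normD.
Qed.

Lemma tr_bnd (A B : M) a b : frob A <= a -> frob B <= b -> `|\tr (A^T *m B)| <= a * b.
Proof.
move=> ha hb; apply: (le_trans (tr_le _ _)); apply: ler_pM; rewrite ?frob_ge0 //.
Qed.

Lemma tr_bnd' (A B : M) a b : frob A <= a -> frob B <= b -> `|\tr (B^T *m A)| <= a * b.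
Proof. by move=> ha hb; rewrite mulrC; apply: tr_bnd. Qed.

End F.

Unset Implicit Arguments. Unset Strict Implicit.
Lemma exp_le {R : realType} {d : nat} {f : R -> 'M[R]_d} {f0 f1 C C' δ} :
  expansion f f0 f1 C δ -> C <= C' -> expansion f f0 f1 C' δ.
Proof.
move=> e hc h hh; apply: (le_trans (e h hh)); apply: ler_wpM2r => //; exact: sqr_ge0.
Qed.

Theorem lemma11 (R : realType) (d N : nat)
  (V : 'M[R]_d) (Lam : 'I_N -> 'rV[R]_d) (W : 'I_N -> 'M[R]_d)
  (Uo Y X : 'M[R]_d) :
  V \in unitmx ->
  (forall n, frob (W n) <= 1) ->
  orthogonal_mx Uo ->
  (forall n, low (Uo^T *m (V *m diag_mx (Lam n) *m invmx V) *m Uo) = 0) ->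
  skew_mx Y -> frob Y = 1 -> skew_mx X ->
  let Mn := fun n => V *m diag_mx (Lam n) *m invmx V in
  let U := fun a : R => Uo *m expm (a *: Y) in
  let K := fun n (a s : R) => (U a)^T *m (Mn n + s *: W n) *m U a in
  let g := fun n a s => low (K n a s) in
  let gd := fun n a s => low (comm (K n a s) X) in
  let gdd := fun n a s => low (comm (comm (K n a s) X) X) in
  let da := fun (f : R -> R -> 'M[R]_d) => derive1 (fun a => f a 0) 0 in
  let ds := fun (f : R -> R -> 'M[R]_d) => derive1 (fun s => f 0 s) 0 in
  let At_a := `| \sum_(n < N)
      \tr ((gd n 0 0)^T *m da (gd n) + (gd n 0 0)^T *m da (gd n)
           + (gdd n 0 0)^T *m da (g n) + (da (g n))^T *m gdd n 0 0) | in
  let At_s := `| \sum_(n < N)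
      \tr ((gd n 0 0)^T *m ds (gd n) + (ds (gd n))^T *m gd n 0 0
           + (gdd n 0 0)^T *m ds (g n) + (ds (g n))^T *m gdd n 0 0) | in
  let A_a := 32 * \sum_(n < N) frob (Mn n) ^+ 2 in
  let A_s := 16 * Num.sqrt (N%:R) * Num.sqrt (\sum_(n < N) frob (Mn n) ^+ 2) in
  At_a <= A_a * frob X ^+ 2 /\ At_s <= A_s * frob X ^+ 2.
Proof.
move=> hV hW hUo hlow hYs hY1 hXs Mn U K g gd gdd da ds At_a At_s A_a A_s.
pose P n := Uo^T *m Mn n *m Uo.
pose Wt n := Uo^T *m W n *m Uo.
pose L n := Y^T *m P n + P n *m Y.
have hY : frob Y <= 1 by rewrite hY1.
have eE := exp_E hY.
have h2 : (0:R) < 2^-1 by rewrite invr_gt0.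
have E0 : expm (0 *: Y) = 1 := expansion0 (ltW h2) eE.
have Kform n a s : K n a s =
    (expm (a *: Y))^T *m (Uo^T *m (Mn n + s *: W n) *m Uo) *m expm (a *: Y).
  by rewrite /K /U trmx_mul !mulmxA.
have K00 n : K n 0 0 = P n.
  by rewrite Kform E0 trmx1 mul1mx mulmx1 scale0r addr0.
have Ka n : exists C, expansion (fun a => K n a 0) (P n) (L n) C 2^-1.
  have e1 := exp_mul (mulr_ge0 (ler0n _ _) (ler0n _ 2)) (lexx 0) (ltW h2) (exp_T eE) (@exp_const R d (P n) 2^-1).
  have e := exp_mul (normr_ge0 _) (mulr_ge0 (ler0n _ _) (ler0n _ 2)) (ltW h2)
     (exp_le e1 (ler_norm _)) eE.
  eexists => h hh; rewrite Kform scale0r addr0.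
  have := e h hh; rewrite trmx1 !mul1mx !mulmx1 ?mulmx0 ?addr0.
  exact.
have Ks n : expansion (fun s => K n 0 s) (P n) (Wt n) 0 2^-1.
  move=> h hh; rewrite Kform E0 trmx1 mul1mx mulmx1 mul0r.
  rewrite mulmxDr mulmxDl -scalemxAr -scalemxAl -/(P n) -/(Wt n) (addrC (P n)) addrK subrr.
  by rewrite frob_tr trmx0 mul0mx mxtrace0 sqrtr0.
have dga n : da (g n) = low (L n).
  have [C e] := Ka n; exact: (derive_expansion h2 (exp_low e)).
have dgda n : da (gd n) = low (comm (L n) X).
  have [C e] := Ka n; exact: (derive_expansion h2 (exp_low (exp_comm X e))).
have dgdda n : da (gdd n) = low (comm (comm (L n) X) X).
  have [C e] := Ka n; exact: (derive_expansion h2 (exp_low (exp_comm X (exp_comm X e)))).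
have dgs n : ds (g n) = low (Wt n).
  exact: (derive_expansion h2 (exp_low (Ks n))).
have dgds n : ds (gd n) = low (comm (Wt n) X).
  exact: (derive_expansion h2 (exp_low (exp_comm X (Ks n)))).
have g0 n : g n 0 0 = 0 by rewrite /g K00; exact: hlow.
have gd0 n : gd n 0 0 = low (comm (P n) X) by rewrite /gd K00.
have gdd0 n : gdd n 0 0 = low (comm (comm (P n) X) X) by rewrite /gdd K00.
have hp n : frob (P n) = frob (Mn n) by apply: frob_orth.
have hWt n : frob (Wt n) <= 1 by rewrite /Wt frob_orth.
set x := frob X.
have x0 : 0 <= x by apply: frob_ge0.
have hL n : frob (L n) <= 2 * frob (Mn n).
  apply: (le_trans (frobD _ _)); rewrite -hp.
  have := frob_mul Y^T (P n); have := frob_mul (P n) Y; rewrite frobT hY1 !mulr1 mul1r.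
  lra.
have B1 n : frob (low (comm (P n) X)) <= 2 * frob (Mn n) * x.
  by apply: (le_trans (frob_low _)); rewrite -hp; apply: frob_comm.
have B2 n : frob (low (comm (L n) X)) <= 4 * frob (Mn n) * x.
  apply: (le_trans (frob_low _)); apply: (le_trans (frob_comm _ _)).
  have := hL n; have := frob_ge0 (Mn n); move=> a b.
  have : 2 * frob (L n) * x <= 2 * (2 * frob (Mn n)) * x.
    by apply: ler_wpM2r => //; apply: ler_wpM2l.
  move=> hh; rewrite -/x; lra.
have B3 n : frob (low (comm (comm (P n) X) X)) <= 4 * frob (Mn n) * x ^+ 2.
  apply: (le_trans (frob_low _)); apply: (le_trans (frob_comm _ _)).
  have b := frob_comm (P n) X; rewrite hp in b.
  have : 2 * frob (comm (P n) X) * x <= 2 * (2 * frob (Mn n) * x) * x.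
    by apply: ler_wpM2r => //; apply: ler_wpM2l.
  move=> hh; rewrite -/x expr2; lra.
have B4 n : frob (low (L n)) <= 2 * frob (Mn n).
  by apply: (le_trans (frob_low _)).
have B5 n : frob (low (comm (Wt n) X)) <= 2 * x.
  apply: (le_trans (frob_low _)); apply: (le_trans (frob_comm _ _)).
  have : 2 * frob (Wt n) * x <= 2 * 1 * x.
    by apply: ler_wpM2r => //; apply: ler_wpM2l.
  move=> hh; rewrite -/x; lra.
have B6 n : frob (low (Wt n)) <= 1 by apply: (le_trans (frob_low _)).
split.
  rewrite /At_a /A_a; apply: (le_trans (ler_norm_sum _ _ _)).
  rewrite -mulrA mulr_suml mulr_sumr; apply: ler_sum => n _.
  rewrite dga dgda gd0 gdd0 !mxtraceD; apply: (le_trans (norm4 _ _ _ _)).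
  have t1 := tr_bnd (B1 n) (B2 n).
  have t3 := tr_bnd (B3 n) (B4 n).
  have t4 := tr_bnd' (B3 n) (B4 n).
  set p := frob (Mn n) in t1 t3 t4 *.
  have -> : 32 * (p ^+ 2 * x ^+ 2) = (2 * p * x) * (4 * p * x) + (2 * p * x) * (4 * p * x)
     + (4 * p * x ^+ 2) * (2 * p) + (4 * p * x ^+ 2) * (2 * p) by ring.
  lra.
rewrite /At_s; apply: (le_trans (ler_norm_sum _ _ _)).
apply: (@le_trans _ _ (\sum_(n < N) 16 * frob (Mn n) * x ^+ 2)).
  apply: ler_sum => n _.
  rewrite dgs dgds gd0 gdd0 !mxtraceD; apply: (le_trans (norm4 _ _ _ _)).
  have t1 := tr_bnd (B1 n) (B5 n).
  have t2 := tr_bnd' (B1 n) (B5 n).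
  have t3 := tr_bnd (B3 n) (B6 n).
  have t4 := tr_bnd' (B3 n) (B6 n).
  set p := frob (Mn n) in t1 t2 t3 t4 *.
  have -> : 16 * p * x ^+ 2 = (2 * p * x) * (2 * x) + (2 * p * x) * (2 * x)
     + (4 * p * x ^+ 2) * 1 + (4 * p * x ^+ 2) * 1 by ring.
  lra.
rewrite /A_s -mulr_suml -mulr_sumr.
set S := \sum_(i < N) frob (Mn i).
apply: ler_wpM2r; first exact: sqr_ge0.
rewrite -mulrA; apply: ler_wpM2l => //.
have s0 : 0 <= S by apply: sumr_ge0 => n _; apply: frob_ge0.
have cs1 := cs (fun n : 'I_N => 1) (fun n => frob (Mn n)).
have e1 : \sum_(n < N) 1 * frob (Mn n) = S.
  by apply: eq_bigr => n _; rewrite mul1r.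
have e2 : \sum_(n < N) (1 : R) ^+ 2 = N%:R.
  by rewrite (eq_bigr (fun _ => 1)) ?sumr_const ?card_ord // => n _; rewrite expr1n.
rewrite e1 e2 in cs1.
rewrite -sqrtrM ?ler0n // -(@ger0_norm _ S) //.
rewrite -sqrtr_sqr ler_sqrt //.
by apply: mulr_ge0; rewrite ?ler0n //; apply: sumr_ge0 => n _; apply: sqr_ge0.
Qed.
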